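(* Let $G$ be a compact, totally disconnected group and $\alpha$ an automorphism of $G$. Then there is an inverse system $\{(G_i,\alpha_i),\varphi_{ij},\mathcal{I}\}$ of compact groups $G_i$ with automorphisms $\alpha_i$, indexed by a directed set $\mathcal{I}$, with bonding homomorphisms $\varphi_{ij}$ satisfying $\varphi_{ij}\circ\alpha_j=\alpha_i\circ\varphi_{ij}$, such that each pair $(G_i,\alpha_i)$ has finite depth and $(G,\alpha)\cong\varprojlim(G_i,\alpha_i)$, i.e. $G$ is isomorphic as a topological group to the inverse limit via an isomorphism intertwining $\alpha$ with the automorphism induced by the $\alpha_i$.
   Context: A pair $(K,\beta)$, with $K$ a compact group and $\beta$ an automorphism, has finite depth if there is an open subgroup $V\le K$ with $\bigcap_{k\in\mathbb{Z}}\beta^k(V)=\{1\}$. *)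

(* Defs.v *)
From HB Require Import structures.
From mathcomp Require Import all_boot all_order all_algebra.
From mathcomp Require Import all_classical all_reals.
From mathcomp Require Import topology.
Set Implicit Arguments. Unset Strict Implicit. Unset Printing Implicit Defensive.
Import Order.TTheory GRing.Theory Num.Theory.
Local Open Scope classical_set_scope.

Record topGroup := TopGroup {
  tg_carrier : topologicalType;
  tg_mul : tg_carrier -> tg_carrier -> tg_carrier;
  tg_inv : tg_carrier -> tg_carrier;
  tg_one : tg_carrier;
  tg_mulA : forall x y z, tg_mul x (tg_mul y z) = tg_mul (tg_mul x y) z;
  tg_mul1 : forall x, tg_mul tg_one x = x;
  tg_mulV : forall x, tg_mul (tg_inv x) x = tg_one;
  tg_mul_cont : continuous (fun p : tg_carrier * tg_carrier => tg_mul p.1 p.2);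
  tg_inv_cont : continuous tg_inv }.
Coercion tg_carrier : topGroup >-> topologicalType.
Arguments tg_one {t}.
Arguments tg_mul {t}.
Arguments tg_inv {t}.

Definition compact_group (G : topGroup) : Prop :=
  compact [set: tg_carrier G] /\ hausdorff_space (tg_carrier G).

Definition tg_hom (G H : topGroup) (f : G -> H) : Prop :=
  forall x y, f (tg_mul x y) = tg_mul (f x) (f y).

Definition cont_hom (G H : topGroup) (f : G -> H) : Prop :=
  tg_hom f /\ continuous f.

Definition tg_aut (G : topGroup) (a : G -> G) : Prop :=
  cont_hom a /\ exists b : G -> G, [/\ cancel a b, cancel b a & continuous b].

Definition subgroup (G : topGroup) (V : set G) : Prop :=
  [/\ V tg_one, (forall x y, V x -> V y -> V (tg_mul x y))
    & forall x, V x -> V (tg_inv x)].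

Definition open_subgroup (G : topGroup) (V : set G) : Prop :=
  subgroup V /\ open V.

(** beta^k(V) for k : int (beta^(-n) (V) is the n-fold preimage). *)
Definition aut_pow_set (G : topGroup) (b : G -> G) (V : set G) (k : int)
  : set G :=
  match k with
  | Posz n => iter n (fun S => b @` S) V
  | Negz n => iter n.+1 (fun S => b @^-1` S) V
  end.

Definition finite_depth (K : topGroup) (b : K -> K) : Prop :=
  exists V : set K, open_subgroup V /\
    \bigcap_(k in [set: int]) aut_pow_set b V k = [set tg_one].

Definition directed_set (I : Type) (le : I -> I -> Prop) : Prop :=
  [/\ (exists i : I, True), (forall i, le i i),
      (forall i j k, le i j -> le j k -> le i k)
    & forall i j, exists k, le i k /\ le j k].

(** An inverse system of compact groups with automorphisms over (I, le):
    bonding maps phi i j : G j -> G i (meaningful only when le i j). *)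
Definition inverse_system_aut (I : Type) (le : I -> I -> Prop)
  (G : I -> topGroup) (a : forall i, G i -> G i)
  (phi : forall i j, G j -> G i) : Prop :=
  directed_set le /\
  (forall i, compact_group (G i) /\ tg_aut (a i)) /\
  (forall i j, le i j -> cont_hom (phi i j)) /\
  (forall i x, phi i i x = x) /\
  (forall i j k x, le i j -> le j k -> phi i j (phi j k x) = phi i k x) /\
  (forall i j x, le i j -> phi i j (a j x) = a i (phi i j x)).

Definition inv_lim (I : Type) (le : I -> I -> Prop) (G : I -> topGroup)
  (phi : forall i j, G j -> G i) : set (prod_topology (fun i => tg_carrier (G i))) :=
  [set x | forall i j, le i j -> phi i j (x j) = x i].

(** f : G -> lim G_i is an isomorphism of topological groups from G onto the
    inverse limit (with the subspace topology and pointwise group law),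
    intertwining a with the automorphism induced by the a_i. *)
Definition lim_iso_aut (K : topGroup) (alpha : K -> K) (I : Type)
  (le : I -> I -> Prop) (G : I -> topGroup) (a : forall i, G i -> G i)
  (phi : forall i j, G j -> G i)
  (f : K -> prod_topology (fun i => tg_carrier (G i))) : Prop :=
  (forall x y i, f (tg_mul x y) i = tg_mul (f x i) (f y i)) /\
  continuous f /\ injective f /\
  range f = inv_lim le phi /\
  (forall U : set K, open U ->
     exists W, open W /\ f @` U = W `&` inv_lim le phi) /\
  (forall x i, f (alpha x) i = a i (f x i)).

(* Main.v *)
Require Import Defs.
From HB Require Import structures.
From mathcomp Require Import all_boot all_order all_algebra.
From mathcomp Require Import all_classical all_reals.
From mathcomp Require Import topology.
Local Open Scope classical_set_scope.

Set Implicit Arguments. Unset Strict Implicit. Unset Printing Implicit Defensive.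

Notation "x ** y" := (tg_mul x y) (at level 40, left associativity).
Notation "x ^-g" := (tg_inv x) (at level 3).

Section GroupLemmas.
Variable G : topGroup.
Implicit Types x y z : G.
Lemma mulgA x y z : x ** (y ** z) = x ** y ** z. Proof. exact: tg_mulA. Qed.
Lemma mul1g x : tg_one ** x = x. Proof. exact: tg_mul1. Qed.
Lemma mulVg x : x^-g ** x = tg_one. Proof. exact: tg_mulV. Qed.
Lemma mulgV x : x ** x^-g = tg_one.
Proof.
rewrite -[LHS]mul1g -{1}(mulVg (x^-g)) -mulgA [X in _ ** X]mulgA mulVg mul1g.
exact: mulVg.
Qed.
Lemma mulg1 x : x ** tg_one = x.
Proof. by rewrite -(mulVg x) mulgA mulgV mul1g. Qed.
Lemma mulKg x y : x^-g ** (x ** y) = y. Proof. by rewrite mulgA mulVg mul1g. Qed.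
Lemma mulKVg x y : x ** (x^-g ** y) = y. Proof. by rewrite mulgA mulgV mul1g. Qed.
Lemma mulgK x y : y ** x ** x^-g = y. Proof. by rewrite -mulgA mulgV mulg1. Qed.
Lemma mulgKV x y : y ** x^-g ** x = y. Proof. by rewrite -mulgA mulVg mulg1. Qed.
Lemma mulg_injl x y z : x ** y = x ** z -> y = z.
Proof. by move=> h; rewrite -(mulKg x y) h mulKg. Qed.
Lemma mulg_injr x y z : y ** x = z ** x -> y = z.
Proof. by move=> h; rewrite -(mulgK x y) h mulgK. Qed.
Lemma invgK x : (x^-g)^-g = x.
Proof. by apply: (@mulg_injl (x^-g)); rewrite mulgV mulVg. Qed.
Lemma invMg x y : (x ** y)^-g = y^-g ** x^-g.
Proof. by apply: (@mulg_injl (x ** y)); rewrite mulgV -mulgA mulKVg mulgV. Qed.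
Lemma invg1 : (@tg_one G)^-g = tg_one.
Proof. by rewrite -[LHS]mul1g mulgV. Qed.
Lemma invg_inj x y : x^-g = y^-g -> x = y.
Proof. by move=> h; rewrite -(invgK x) h invgK. Qed.
End GroupLemmas.

Set Implicit Arguments. Unset Strict Implicit. Unset Printing Implicit Defensive.

Section ZeroDim.
Variable T : topologicalType.
Hypotheses (hT : hausdorff_space T) (cT : compact [set: T]).

Definition qcomp (x : T) := [set y | forall K, clopen K -> K x -> K y].

Lemma qcomp_sub (x : T) (W : set T) : open W -> qcomp x `<=` W ->
  exists K, [/\ clopen K, K x & K `<=` W].
Proof.
move=> oW QW; apply: contrapT => /forallNP nK.
pose F := filter_from [set K | clopen K /\ K x] (fun K => K `&` ~` W).
have FF : ProperFilter F.
  apply: filter_from_proper.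
  - apply: filter_from_filter; first by exists setT; split => //; exact: clopenT.
    move=> A B [cA Ax] [cB Bx]; exists (A `&` B); first by split => //; exact: clopenI.
    by move=> y [[Ay By] nWy].
  - move=> K [cK Kx].
    have [y [Ky nWy]] : exists y, K y /\ ~ W y.
      apply: contrapT => /forallNP h; apply: (nK K); split => // y Ky.
      by apply: contrapT => nWy; apply: (h y).
    by exists y.
have cW : compact (~` W).
  by apply: (subclosed_compact _ cT) => //; exact: open_closedC.
have FW : F (~` W) by exists setT; [split => //; exact: clopenT|move=> y []].
have [y [nWy cly]] := cW F FF FW.
apply: nWy; apply: QW => K cK Kx; apply: contrapT => nKy.
have nb : nbhs y (~` K).
  by apply: open_nbhs_nbhs; split => //; apply: closed_openC; case: cK.
have FK : F (K `&` ~` W) by exists K.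
by have [z [[Kz _] nKz]] := cly _ _ FK nb.
Qed.

Lemma qcomp_closed x : closed (qcomp x).
Proof.
move=> y cly K cK Kx; have [_ cK'] := cK.
have : closure (qcomp x) `<=` closure K by apply: closureS => z Qz; exact: Qz.
by move/(_ y cly); move: cK'; rewrite closure_id => <-.
Qed.

Lemma sep_closed (A B : set T) : closed A -> closed B -> A `&` B = set0 ->
  exists U V, [/\ open U, open V, A `<=` U, B `<=` V & U `&` V = set0].
Proof.
move=> cA cB AB.
have nT := compact_normal hT cT.
have snA : set_nbhs A (~` B).
  apply/set_nbhsP; exists (~` B); split => //; first exact: closed_openC.
  by move=> z Az Bz; have : (A `&` B) z by []; rewrite AB.
have [C snC clCB] := nT A cA _ snA.
case/set_nbhsP: snC => U [oU AU UC].
exists U, (~` closure C); split => //.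
- exact/closed_openC/closed_closure.
- by move=> z Bz clz; apply: (clCB z clz).
- apply/seteqP; split => // z [Uz]; apply; apply: subset_closure; exact: UC.
Qed.

Lemma qcomp_connected x : connected (qcomp x).
Proof.
apply/connectedP => E [E0 QE [s1 s2]].
have clQ := @qcomp_closed x.
have clE b : closed (E b).
  move=> y cly.
  have EQ : E b `<=` qcomp x by rewrite QE => z Ez; case: b Ez cly => ?; by [right|left].
  have Qy : qcomp x y by apply: clQ; apply: (closureS EQ).
  move: Qy; rewrite QE => -[] Ey; case: b {EQ} cly => //= cly.
  + by have : (E false `&` closure (E true)) y by []; rewrite s2.
  + by have : (closure (E false) `&` E true) y by []; rewrite s1.
have [U [V [oU oV EU EV UV]]] := sep_closed (clE false) (clE true)
  (separated_disjoint (conj s1 s2)).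
have QUV : qcomp x `<=` U `|` V by rewrite QE => z [/EU|/EV] ?; by [left|right].
have [K [cK Kx KUV]] := qcomp_sub (openU oU oV) QUV.
have cKU : clopen (K `&` U).
  split; first by apply: openI => //; case: cK.
  have -> : K `&` U = K `&` ~` V.
    apply/seteqP; split=> z [Kz] => [Uz|nVz]; split => //.
      by move=> Vz; have : (U `&` V) z by []; rewrite UV.
    by case: (KUV z Kz).
  by apply: closedI; [case: cK|exact: open_closedC].
have cKV : clopen (K `&` V).
  split; first by apply: openI => //; case: cK.
  have -> : K `&` V = K `&` ~` U.
    apply/seteqP; split=> z [Kz] => [Vz|nUz]; split => //.
      by move=> Uz; have : (U `&` V) z by []; rewrite UV.
    by case: (KUV z Kz).
  by apply: closedI; [case: cK|exact: open_closedC].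
have Qxx : qcomp x x by [].
move: (Qxx); rewrite QE => -[/EU Ux|/EV Vx].
- have [y Ey] := E0 true.
  have Qy : qcomp x y by rewrite QE; right.
  have [_ Uy] := Qy _ cKU (conj Kx Ux).
  have : (U `&` V) y by split => //; exact: EV.
  by rewrite UV.
- have [y Ey] := E0 false.
  have Qy : qcomp x y by rewrite QE; left.
  have [_ Vy] := Qy _ cKV (conj Kx Vx).
  have : (U `&` V) y by split => //; exact: EU.
  by rewrite UV.
Qed.

Lemma clopen_base (x : T) (U : set T) : totally_disconnected [set: T] ->
  open U -> U x -> exists K, [/\ clopen K, K x & K `<=` U].
Proof.
move=> tdT oU Ux; apply: qcomp_sub => // y Qy.
have : connected_component [set: T] x y.
  by apply: (@connected_component_max _ _ (qcomp x)) => //; exact: qcomp_connected.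
by rewrite tdT // => ->.
Qed.
End ZeroDim.

Unset Implicit Arguments. Unset Printing Implicit Defensive.

Lemma fst_cont (A B : topologicalType) : continuous (@fst A B).
Proof. by move=> [a b]; exact: cvg_fst. Qed.
Lemma snd_cont (A B : topologicalType) : continuous (@snd A B).
Proof. by move=> [a b]; exact: cvg_snd. Qed.

Section TopGroupLemmas.
Variable G : topGroup.
Implicit Types x y z : G.

Lemma cont_mul2 (X : topologicalType) (f g : X -> G) :
  continuous f -> continuous g -> continuous (fun t => f t ** g t).
Proof.
move=> cf cg t; apply: (@continuous2_cvg _ _ _ _ _ _ f g tg_mul).
- exact: (@tg_mul_cont G (f t, g t)).
- exact: cf.
- exact: cg.
Qed.

Lemma cont_inv1 (X : topologicalType) (f : X -> G) :
  continuous f -> continuous (fun t => (f t)^-g).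
Proof. move=> cf t; apply: continuous_comp; [exact: cf|exact: tg_inv_cont]. Qed.

Lemma cst_cont (X Y : topologicalType) (c : Y) : continuous (fun _ : X => c).
Proof. by move=> x; exact: cvg_cst. Qed.
Lemma id_cont (X : topologicalType) : continuous (@id X).
Proof. by move=> x; exact: cvg_id. Qed.
Lemma lmul_cont c : continuous (fun x : G => c ** x).
Proof.
exact: (@cont_mul2 G (fun _ => c) id (@cst_cont G G c) (@id_cont G)).
Qed.
Lemma rmul_cont c : continuous (fun x : G => x ** c).
Proof. exact: (@cont_mul2 G id (fun _ => c) (@id_cont G) (@cst_cont G G c)). Qed.

Lemma open_lpre c (A : set G) : open A -> open [set x | A (c ** x)].
Proof. by move=> oA; move/continuousP: (lmul_cont c); apply. Qed.
Lemma open_rpre c (A : set G) : open A -> open [set x | A (x ** c)].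
Proof. by move=> oA; move/continuousP: (rmul_cont c); apply. Qed.
Lemma open_ipre (A : set G) : open A -> open [set x | A (x^-g)].
Proof. by move=> oA; move/continuousP: (@tg_inv_cont G); apply. Qed.

End TopGroupLemmas.

Definition normal (G : topGroup) (V : set G) :=
  forall g x, V x -> V (g ** x ** g^-g).
Arguments normal {G} V.
Definition ons (G : topGroup) (V : set G) := open_subgroup V /\ normal V.
Arguments ons {G} V.

Section Tube.
Variable G : topGroup.
Hypothesis cG : compact [set: tg_carrier G].

Inductive gen (S : set G) : G -> Prop :=
| gen1 : gen S tg_one
| genM x g v : S v -> gen S x -> gen S (x ** (g ** v ** g^-g)).

Lemma gen_open_normal (K : set G) : clopen K -> K tg_one ->
  exists H : set G, ons H /\ H `<=` K.
Proof.
move=> [oK clK] K1.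
have cK : compact K by apply: (subclosed_compact clK cG).
have cKG : compact (K `*` [set: G]) by apply: compact_setX.
pose Phi := fun p : (G * G) * G => p.1.1 ** (p.1.2 ** p.2 ** p.1.2^-g).
have cPhi : continuous Phi.
  apply: cont_mul2; first by move=> p; apply: continuous_comp; [exact: fst_cont|exact: fst_cont].
  apply: cont_mul2; last first.
    by apply: cont_inv1 => p; apply: continuous_comp; [exact: fst_cont|exact: snd_cont].
  apply: cont_mul2; last exact: snd_cont.
  by move=> p; apply: continuous_comp; [exact: fst_cont|exact: snd_cont].
have : \forall v \near tg_one, (K `*` [set: G]) `<=`
    (fun p : G * G => K (p.1 ** (p.2 ** v ** p.2^-g))).
  apply: ((iffLR (compact_near_coveringP _)) cKG G (nbhs tg_one)
    (fun v p => K (p.1 ** (p.2 ** v ** p.2^-g))) _).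
  move=> [k g] [/= Kk _].
  have : nbhs (Phi ((k, g), tg_one)) K.
    by apply: open_nbhs_nbhs; split => //; rewrite /Phi /= mulg1 mulgV mulg1.
  move/cPhi.
  done.
rewrite /prop_near1 (@nbhsE G) => -[V [oV V1] VP].
have HV : forall v k g, V v -> K k -> K (k ** (g ** v ** g^-g)).
  by move=> v k g Vv Kk; exact: (VP v Vv (k, g)).
pose S := V `&` [set v | V (v^-g)].
have oS : open S by apply: openI => //; exact: open_ipre.
have S1 : S tg_one by split => //=; rewrite invg1.
have SV : forall v, S v -> S (v^-g) by move=> v [Vv Viv]; split => //=; rewrite invgK.
have genMl : forall x y, gen S x -> gen S y -> gen S (x ** y).
  move=> x y gx; elim => [|y' g v Sv gy' IH]; first by rewrite mulg1.
  by rewrite mulgA; apply: genM.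
have genC : forall g v, S v -> gen S (g ** v ** g^-g).
  by move=> g v Sv; rewrite -[_ ** _ ** _]mul1g; apply: genM => //; exact: gen1.
have genS : forall v, S v -> gen S v.
  by move=> v Sv; have := genC tg_one v Sv; rewrite mul1g invg1 mulg1.
exists (gen S); split; last first.
  have : forall k x, K k -> gen S x -> K (k ** x).
    move=> k x Kk; elim => [|x' g v Sv gx' IH]; first by rewrite mulg1.
    by rewrite mulgA; apply: HV => //; case: Sv.
  by move=> + x gx => /(_ tg_one x K1 gx); rewrite mul1g.
split; last first.
  move=> h x; elim => [|x' g v Sv gx' IH]; first by rewrite mulg1 mulgV; exact: gen1.
  have -> : h ** (x' ** (g ** v ** g^-g)) ** h^-g =
      (h ** x' ** h^-g) ** ((h ** g) ** v ** (h ** g)^-g).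
    by rewrite invMg !mulgA mulgKV.
  by apply: genM.
split; last first.
  rewrite openE => x gx.
  have : nbhs x [set y | S (x^-g ** y)].
    by apply: open_nbhs_nbhs; split; [exact: open_lpre|rewrite /= mulVg].
  apply: filterS => y Sy; rewrite -(mulKVg x y); apply: genMl => //; exact: genS.
split; first exact: gen1.
- exact: genMl.
- move=> x; elim => [|x' g v Sv gx' IH]; first by rewrite invg1; exact: gen1.
  rewrite invMg; apply: genMl => //.
  have -> : (g ** v ** g^-g)^-g = g ** v^-g ** g^-g by rewrite !invMg invgK mulgA.
  by apply: genC; apply: SV.
Qed.
End Tube.

Unset Implicit Arguments. Unset Printing Implicit Defensive.

Lemma hom1 (G H : topGroup) (f : G -> H) : tg_hom f -> f tg_one = tg_one.
Proof.
move=> hf; apply: (@mulg_injl H (f tg_one)); rewrite -hf !mulg1 //.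
Qed.
Lemma homV (G H : topGroup) (f : G -> H) x : tg_hom f -> f (x^-g) = (f x)^-g.
Proof.
move=> hf; apply: (@mulg_injl H (f x)); rewrite -hf mulgV mulgV; exact: hom1.
Qed.

Section Quot.
Variable G : topGroup.
Variable N : set G.
Hypotheses (Nsub : subgroup N) (Nnor : normal N).

Lemma N1 : N tg_one. Proof. by case: Nsub. Qed.
Lemma NM x y : N x -> N y -> N (x ** y). Proof. by case: Nsub => _ h _; apply: h. Qed.
Lemma NV x : N x -> N (x^-g). Proof. by case: Nsub => _ _ h; apply: h. Qed.
Lemma NVV x : N (x^-g) -> N x. Proof. by move/NV; rewrite invgK. Qed.

Definition coset (x : G) := [set y | N (x^-g ** y)].
Definition qT := {S : set G | exists x, S = coset x}.
HB.instance Definition _ := gen_eqMixin qT.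
HB.instance Definition _ := gen_choiceMixin qT.
Definition qpi (x : G) : qT := exist _ (coset x) (ex_intro _ x erefl).
Definition qrep (q : qT) : G := projT1 (cid (proj2_sig q)).

Lemma qrepK q : qpi (qrep q) = q.
Proof.
case: q => S HS; rewrite /qpi /qrep /=.
move: (projT2 (cid HS)) => e; apply: eq_exist; first by rewrite -e.
Qed.

Lemma coset_eq x y : coset x = coset y <-> N (x^-g ** y).
Proof.
split => [e|Nxy].
  have : coset y y by rewrite /coset /= mulVg; exact: N1.
  by rewrite -e.
apply/seteqP; split => z; rewrite /coset /=.
  move=> Nxz; have -> : y^-g ** z = (x^-g ** y)^-g ** (x^-g ** z).
    by rewrite invMg invgK -mulgA mulKVg.
  by apply: NM => //; exact: NV.
move=> Nyz; have -> : x^-g ** z = (x^-g ** y) ** (y^-g ** z) by rewrite -mulgA mulKVg.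
exact: NM.
Qed.

Lemma qpi_eq x y : qpi x = qpi y <-> N (x^-g ** y).
Proof.
split => [e|/coset_eq e].
  by apply/coset_eq; exact: (congr1 (@proj1_sig _ _) e).
rewrite /qpi; move: (ex_intro _ x _) (ex_intro _ y _); rewrite e => p q.
by rewrite (Prop_irrelevance p q).
Qed.

Lemma qrepP x : N (x^-g ** qrep (qpi x)).
Proof. by apply/qpi_eq; rewrite qrepK. Qed.

Lemma qpi_surj q : exists x, q = qpi x.
Proof. by exists (qrep q); rewrite qrepK. Qed.

Lemma Nconj g x : N x -> N (g^-g ** x ** g).
Proof. by move=> Nx; have := Nnor (g^-g) x Nx; rewrite invgK. Qed.

Definition qmul (p q : qT) : qT := qpi (qrep p ** qrep q).
Definition qinv (p : qT) : qT := qpi ((qrep p)^-g).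
Definition qone : qT := qpi tg_one.

Lemma qpiM x y : qmul (qpi x) (qpi y) = qpi (x ** y).
Proof.
apply/qpi_eq; set x' := qrep (qpi x); set y' := qrep (qpi y).
have -> : (x' ** y')^-g ** (x ** y) =
    (y'^-g ** y) ** (y^-g ** (x'^-g ** x) ** y).
  by rewrite invMg !mulgA mulgK.
apply: NM; first by apply: NVV; rewrite invMg invgK; exact: qrepP.
by apply: Nconj; apply: NVV; rewrite invMg invgK; exact: qrepP.
Qed.

Lemma qpiV x : qinv (qpi x) = qpi (x^-g).
Proof.
apply/qpi_eq; set x' := qrep (qpi x); rewrite invgK.
have -> : x' ** x^-g = x' ** (x^-g ** x') ** x'^-g by rewrite !mulgA mulgK.
by apply: Nnor; exact: qrepP.
Qed.

Lemma qmulA p q r : qmul p (qmul q r) = qmul (qmul p q) r.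
Proof.
by rewrite -[p]qrepK -[q]qrepK -[r]qrepK !qpiM mulgA.
Qed.
Lemma qmul1 p : qmul qone p = p.
Proof. by rewrite -[p]qrepK /qone qpiM mul1g. Qed.
Lemma qmulV p : qmul (qinv p) p = qone.
Proof. by rewrite -[p]qrepK qpiV qpiM mulVg. Qed.

Definition qopen (U : set qT) := open (qpi @^-1` U).

Program Definition qT_topmixin := @isOpenTopological.Build qT qopen _ _ _.
Next Obligation. by rewrite /qopen preimage_setT; exact: openT. Qed.
Next Obligation. by move=> ? ? ? ?; exact: openI. Qed.
Next Obligation. by move=> I f ofi; apply: bigcup_open => i _; exact: ofi. Qed.
HB.instance Definition _ := qT_topmixin.

Lemma qopenE (U : set qT) : open U = open (qpi @^-1` U).
Proof. by []. Qed.

Lemma qpi_cont : continuous qpi.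
Proof. by apply/continuousP => A oA; rewrite -qopenE. Qed.

Lemma qopen_image (A : set G) : open A -> open (qpi @` A).
Proof.
move=> oA; rewrite qopenE.
have -> : qpi @^-1` (qpi @` A) = \bigcup_(n in N) [set y | A (y ** n^-g)].
  apply/seteqP; split => y /=.
    case=> a Aa /qpi_eq Nay; exists (a^-g ** y) => //=.
    by rewrite invMg invgK mulgA mulgV mul1g.
  case=> n Nn Ayn; exists (y ** n^-g) => //; apply/qpi_eq.
  by rewrite invMg invgK mulgKV.
by apply: bigcup_open => n _; exact: open_rpre.
Qed.

Lemma qmul_cont : continuous (fun p : qT * qT => qmul p.1 p.2).
Proof.
move=> [a b] W /=; rewrite (@nbhsE qT) => -[O [oO Oab] OW].
rewrite -(qrepK a) -(qrepK b) qpiM in Oab.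
set x := qrep a in Oab *; set y := qrep b in Oab *.
have oP : open (qpi @^-1` O) by rewrite -qopenE.
have : nbhs (x, y) [set p : G * G | (qpi @^-1` O) (p.1 ** p.2)].
  apply: (@tg_mul_cont G (x, y)); apply: open_nbhs_nbhs; split => //.
case=> -[A B] /= [nA nB] AB.
move: nA nB; rewrite !(@nbhsE G) => -[A' [oA' A'x] A'A] [B' [oB' B'y] B'B].
exists (qpi @` A', qpi @` B') => /=.
  split; apply: open_nbhs_nbhs; split; try exact: qopen_image.
  - by exists x => //; rewrite qrepK.
  - by exists y => //; rewrite qrepK.
move=> [p q] /= [[x1 Ax1 <-] [y1 By1 <-]]; apply: OW; rewrite qpiM.
by apply: (AB (x1, y1)); split; [exact: A'A|exact: B'B].
Qed.

Lemma qinv_cont : continuous qinv.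
Proof.
move=> a W /=; rewrite (@nbhsE qT) => -[O [oO Oa] OW].
rewrite -(qrepK a) qpiV in Oa.
set x := qrep a in Oa *.
have oP : open (qpi @^-1` O) by rewrite -qopenE.
pose A := [set z : G | O (qpi (z^-g))].
have oA : open A by apply: (@open_ipre G (qpi @^-1` O)).
have : nbhs a (qpi @` A).
  apply: open_nbhs_nbhs; split; first exact: qopen_image.
  by exists x => //; rewrite qrepK.
by apply: filterS => q [z Az <-]; apply: OW; rewrite /= qpiV.
Qed.

Lemma qcompact : compact [set: G] -> compact [set: qT].
Proof.
move=> cG; have -> : [set: qT] = qpi @` [set: G].
  by apply/seteqP; split => q // _; exists (qrep q) => //; rewrite qrepK.
apply: continuous_compact => //; apply: continuous_subspaceT; exact: qpi_cont.
Qed.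

Hypothesis Nsep : forall z, ~ N z ->
  exists M : set G, [/\ open M, subgroup M, N `<=` M & ~ M z].

Lemma qhausdorff : hausdorff_space qT.
Proof.
rewrite open_hausdorff => p q /eqP pq.
set x := qrep p; set y := qrep q.
have nN : ~ N (x^-g ** y).
  by move=> /qpi_eq; rewrite !qrepK.
have [M [oM sM NM' nM]] := Nsep _ nN; case: sM => M1 Mmul Minv.
exists (qpi @` [set z | M (x^-g ** z)], qpi @` [set z | M (y^-g ** z)]) => /=.
  split; rewrite inE.
  - by exists x; rewrite ?qrepK //= mulVg.
  - by exists y; rewrite ?qrepK //= mulVg.
split; try (apply: qopen_image; exact: open_lpre).
apply/eqP/seteqP; split => // r [[z1 Mz1 e1] [z2 Mz2 e2]].
rewrite -e2 in e1; move/qpi_eq/NM': e1 => Mz.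
apply: nM; have -> : x^-g ** y = (x^-g ** z1) ** (z1^-g ** z2) ** (y^-g ** z2)^-g.
  by rewrite invMg invgK !mulgA !mulgK.
by apply: (Mmul); [apply: (Mmul)|apply: (Minv)].
Qed.

Definition qG : topGroup := TopGroup qmulA qmul1 qmulV qmul_cont qinv_cont.

End Quot.
Arguments qT {G} N.
Arguments qpi {G} N x.
Arguments qrep {G} N q.
Arguments qrepK {G N} q.
Arguments qpi_eq {G N} Nsub {x y}.
Arguments qrepP {G N} Nsub x.
Arguments qpiM {G N} Nsub Nnor x y.
Arguments qpiV {G N} Nsub Nnor x.
Arguments qopenE {G N} U.
Arguments qopen_image {G N} Nsub A.
Arguments qcompact {G N} _.
Arguments qhausdorff {G N} Nsub Nsep.
Arguments qG {G} N Nsub Nnor.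
Arguments qpi_cont {G N}.
Arguments N1 {G N} Nsub.
Arguments NM {G N} Nsub {x y}.
Arguments NV {G N} Nsub {x}.
Arguments NVV {G N} Nsub {x}.
Arguments qmul {G} N p q.
Arguments qinv {G} N p.
Arguments qone {G} N.
Arguments coset {G} N x.

Unset Implicit Arguments. Unset Printing Implicit Defensive.

Lemma iter_hom (G : topGroup) (f : G -> G) n : tg_hom f -> tg_hom (iter n f).
Proof. by move=> hf x y; elim: n => //= n ->; rewrite hf. Qed.
Lemma iter_cont (G : topGroup) (f : G -> G) n : continuous f -> continuous (iter n f).
Proof.
move=> cf; elim: n => [|n IH] /=; first exact: id_cont.
by move=> x; apply: continuous_comp; [exact: IH|exact: cf].
Qed.

Section QuotAut.
Variable G : topGroup.
Variable N : set G.
Hypotheses (Nsub : subgroup N) (Nnor : normal N).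
Variable a : G -> G.
Hypotheses (ha : tg_hom a) (ca : continuous a) (Na : forall x, N x -> N (a x)).

Definition qa (q : qT N) : qT N := qpi N (a (qrep N q)).

Lemma qaE x : qa (qpi N x) = qpi N (a x).
Proof.
apply/(qpi_eq Nsub); rewrite -homV // -ha; apply: Na.
by apply: (NVV Nsub); rewrite invMg invgK; exact: qrepP.
Qed.

Lemma qa_hom : @tg_hom (qG N Nsub Nnor) (qG N Nsub Nnor) qa.
Proof.
move=> p q; rewrite -[p](qrepK) -[q](qrepK) /qG /=.
move: (qrep N p) (qrep N q) => x y.
have e1 := qpiM Nsub Nnor x y; have e2 := qpiM Nsub Nnor (a x) (a y).
rewrite e1 (qaE (x ** y)) (qaE x) (qaE y) e2 ha //.
Qed.

Lemma qa_cont : continuous (qa : qG N Nsub Nnor -> qG N Nsub Nnor).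
Proof.
apply/continuousP => U oU; rewrite qopenE.
have -> : qpi N @^-1` (qa @^-1` U) = a @^-1` (qpi N @^-1` U).
  by apply/seteqP; split => z /=; rewrite qaE.
by move/continuousP: ca; apply; rewrite -qopenE.
Qed.
End QuotAut.

Arguments qa {G} N a q.
Arguments qaE {G N} Nsub {a} ha Na x. About qa_hom. About qa_cont.

Lemma iter_hom1 (G : topGroup) (f : G -> G) n : tg_hom f -> iter n f tg_one = tg_one.
Proof. by move=> hf; apply: hom1; exact: iter_hom. Qed.

Section Depth.
Variable G : topGroup.
Variables (al be : G -> G).
Hypotheses (hal : tg_hom al) (cal : continuous al) (hbe : tg_hom be)
  (cbe : continuous be) (ab : cancel al be) (ba : cancel be al).
Variable C : set G.
Hypothesis oC : ons C.

Lemma C1 : C tg_one. Proof. by case: oC => -[[]]. Qed.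
Lemma CM x y : C x -> C y -> C (x ** y). Proof. by case: oC => -[[_ h _]] _ _; apply: h. Qed.
Lemma CV x : C x -> C (x^-g). Proof. by case: oC => -[[_ _ h]] _ _; apply: h. Qed.
Lemma Copen : open C. Proof. by case: oC => -[]. Qed.
Lemma Cnor : normal C. Proof. by case: oC. Qed.

Definition ND (x : G) := forall n, C (iter n al x) /\ C (iter n be x).

Lemma ND_sub : subgroup ND.
Proof.
split.
- by move=> n; rewrite !iter_hom1 //; split; exact: C1.
- move=> x y Hx Hy n; rewrite !iter_hom //.
  by have [? ?] := Hx n; have [? ?] := Hy n; split; apply: CM.
- move=> x Hx n.
  rewrite (homV _ _ (iter n al) x (iter_hom _ _ n hal)).
  rewrite (homV _ _ (iter n be) x (iter_hom _ _ n hbe)).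
  by have [? ?] := Hx n; split; apply: CV.
Qed.

Lemma ND_nor : normal ND.
Proof.
move=> g x Hx n; rewrite !iter_hom //.
rewrite (homV _ _ (iter n al) g (iter_hom _ _ n hal)).
rewrite (homV _ _ (iter n be) g (iter_hom _ _ n hbe)).
by have [? ?] := Hx n; split; apply: Cnor.
Qed.

Lemma ND_C x : ND x -> C x. Proof. by move/(_ 0%N) => []. Qed.

Lemma ND_al x : ND x -> ND (al x).
Proof.
move=> Hx n; split; first by rewrite -iterSr; case: (Hx n.+1).
case: n => [|n]; first by case: (Hx 1%N).
by rewrite iterSr ab; case: (Hx n).
Qed.

Lemma ND_be x : ND x -> ND (be x).
Proof.
move=> Hx n; split; last by rewrite -iterSr; case: (Hx n.+1).
case: n => [|n]; first by case: (Hx 1%N).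
by rewrite iterSr ba; case: (Hx n).
Qed.

Lemma ND_iter_al n x : ND x -> ND (iter n al x).
Proof. by elim: n => //= n IH /IH; exact: ND_al. Qed.
Lemma ND_iter_be n x : ND x -> ND (iter n be x).
Proof. by elim: n => //= n IH /IH; exact: ND_be. Qed.

Lemma Ctr_be n x y : ND (x^-g ** y) -> C (iter n be x) -> C (iter n be y).
Proof.
move=> Nxy Cx; rewrite -(mulKVg x y) (iter_hom _ _ n hbe); apply: CM => //.
by apply: ND_C; exact: ND_iter_be.
Qed.
Lemma Ctr_al n x y : ND (x^-g ** y) -> C (iter n al x) -> C (iter n al y).
Proof.
move=> Nxy Cx; rewrite -(mulKVg x y) (iter_hom _ _ n hal); apply: CM => //.
by apply: ND_C; exact: ND_iter_al.
Qed.

Lemma ND_sep z : ~ ND z -> exists M : set G, [/\ open M, subgroup M, ND `<=` M & ~ M z].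
Proof.
move=> /existsNP [n /not_andP [nC|nC]].
- exists (iter n al @^-1` C); split => //.
  + by move/continuousP: (iter_cont _ _ n cal); apply; exact: Copen.
  + split => /=; first by rewrite iter_hom1 //; exact: C1.
    * by move=> x y; rewrite /= iter_hom //; exact: CM.
    * by move=> x; rewrite /= (homV _ _ (iter n al) x (iter_hom _ _ n hal)); exact: CV.
  + by move=> x /(_ n) [].
- exists (iter n be @^-1` C); split => //.
  + by move/continuousP: (iter_cont _ _ n cbe); apply; exact: Copen.
  + split => /=; first by rewrite iter_hom1 //; exact: C1.
    * by move=> x y; rewrite /= iter_hom //; exact: CM.
    * by move=> x; rewrite /= (homV _ _ (iter n be) x (iter_hom _ _ n hbe)); exact: CV.
  + by move=> x /(_ n) [].
Qed.

Definition QD := qG ND ND_sub ND_nor.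
Definition qal : QD -> QD := qa ND al.
Definition qbe : QD -> QD := qa ND be.

Lemma qalE x : qal (qpi ND x) = qpi ND (al x).
Proof. exact: (qaE ND_sub hal ND_al). Qed.
Lemma qbeE x : qbe (qpi ND x) = qpi ND (be x).
Proof. exact: (qaE ND_sub hbe ND_be). Qed.

Lemma qal_aut : tg_aut qal.
Proof.
split; first split.
- exact: (qa_hom _ _ ND_sub ND_nor al hal ND_al).
- exact: (qa_cont _ _ ND_sub ND_nor al hal cal ND_al).
exists qbe; split.
- by move=> q; rewrite -[q]qrepK qalE qbeE ab.
- by move=> q; rewrite -[q]qrepK qbeE qalE ba.
- exact: (qa_cont _ _ ND_sub ND_nor be hbe cbe ND_be).
Qed.

Definition QW : set QD := qpi ND @` C.

Lemma QW_mem x : QW (qpi ND x) <-> C x.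
Proof.
split; last by move=> Cx; exists x.
case=> c Cc /(qpi_eq ND_sub) Ncx.
by rewrite -(mulKVg c x); apply: CM => //; exact: ND_C.
Qed.

Lemma depth_pos n x : aut_pow_set qal QW (Posz n) (qpi ND x) <-> C (iter n be x).
Proof.
elim: n x => [|n IH] x; first exact: QW_mem.
rewrite /aut_pow_set /= -/(aut_pow_set qal QW (Posz n)); split.
- case=> q; rewrite -[q]qrepK; move: (qrep ND q) => y /IH Cy.
  rewrite qalE => /(qpi_eq ND_sub) Nyx; apply: (Ctr_be n.+1 _ _ Nyx).
  by rewrite iterSr ab.
- move=> Cx; exists (qpi ND (be x)); last by rewrite qalE ba.
  by apply/IH; rewrite -iterSr.
Qed.

Lemma depth_neg n x : aut_pow_set qal QW (Negz n) (qpi ND x) <-> C (iter n.+1 al x).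
Proof.
elim: n x => [|n IH] x.
  by rewrite /aut_pow_set /= qalE; exact: QW_mem.
change (aut_pow_set qal QW (Negz n) (qal (qpi ND x)) <-> C (iter n.+2 al x)).
by rewrite qalE (iterSr n.+1); exact: IH.
Qed.

Lemma QD_finite_depth : finite_depth qal.
Proof.
exists QW; split.
  split; last exact: (qopen_image ND_sub _ Copen).
  split.
  - by apply/QW_mem; exact: C1.
  - move=> p q; rewrite -[p]qrepK -[q]qrepK /QD /qG /= (qpiM ND_sub ND_nor).
    by move=> /QW_mem Cp /QW_mem Cq; apply/QW_mem; exact: CM.
  - move=> p; rewrite -[p]qrepK /QD /qG /= (qpiV ND_sub ND_nor).
    by move=> /QW_mem Cp; apply/QW_mem; exact: CV.
apply/seteqP; split => q.
- rewrite -[q]qrepK; move: (qrep ND q) => x Hx.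
  have NDx : ND x.
    move=> n; split; last by apply/(depth_pos n x); exact: Hx.
    case: n => [|n]; first by apply/(depth_pos 0 x); exact: Hx.
    by apply/(depth_neg n x); exact: Hx.
  rewrite /= /QD /qG /=; apply/(qpi_eq ND_sub); rewrite mulg1.
  by case: ND_sub => _ _; apply.
- move=> -> k _; have -> : (tg_one : QD) = qpi ND tg_one by [].
  case: k => n; [apply/depth_pos|apply/depth_neg]; rewrite iter_hom1 //; exact: C1.
Qed.

Lemma QD_compact_group : compact [set: G] -> compact_group QD.
Proof.
move=> cG; split; first exact: qcompact.
exact: (qhausdorff ND_sub ND_sep).
Qed.

End Depth.

Unset Implicit Arguments. Unset Printing Implicit Defensive.

Lemma prod_cont (X : topologicalType) (I : Type) (K : I -> topologicalType)
  (f : X -> prod_topology K) : (forall i, continuous (fun x => f x i)) -> continuous f.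
Proof.
move=> cf x; apply/cvg_sup.
move=> i; move: x; apply/(@continuousP X (initial_topology (fun g : prod_topology K => g i))).
move=> A [B oB <-].
by move/continuousP: (cf i); apply.
Qed.

Lemma cyl_open (I : Type) (K : I -> topologicalType) (i : I) (V : set (K i)) :
  open V -> open ((fun g : prod_topology K => g i) @^-1` V).
Proof.
move=> oV; rewrite openE => g Vg.
have := (iffLR (@cvg_sup _ _ _ (nbhs (g : prod_topology K)) g _)) (@cvg_id _ _) i.
apply; apply: open_nbhs_nbhs; split => //; exists V => //.
Qed.

Lemma onsT (G : topGroup) : ons [set: G].
Proof. by split; [split; [split|exact: openT]|]. Qed.

Lemma onsI (G : topGroup) (C D : set G) : ons C -> ons D -> ons (C `&` D).
Proof.
move=> [[[C1 CM CV] oC] nC] [[[D1 DM DV] oD] nD].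
split; [split; [split|exact: openI]|].
- by split.
- by move=> x y [? ?] [? ?]; split; [apply: (CM)|apply: (DM)].
- by move=> x [? ?]; split; [apply: (CV)|apply: (DV)].
- by move=> g x [? ?]; split; [apply: (nC)|apply: (nD)].
Qed.

Section Main.
Variables (G : topGroup) (al be : G -> G).
Hypotheses (cG : compact [set: G]) (hG : hausdorff_space G)
  (tdG : totally_disconnected [set: G]).
Hypotheses (hal : tg_hom al) (cal : continuous al) (hbe : tg_hom be)
  (cbe : continuous be) (ab : cancel al be) (ba : cancel be al).

Lemma KL (U : set G) : open U -> U tg_one -> exists C, ons C /\ C `<=` U.
Proof.
move=> oU U1; have [K [cK K1 KU]] := clopen_base hG cG tdG oU U1.
have [H [oH HK]] := gen_open_normal G cG K cK K1.
exists H; split; first exact: oH.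
by move=> x Hx; apply: KU; apply: HK.
Qed.

Definition Idx := {C : set G | ons C}.
Definition le (i j : Idx) := proj1_sig j `<=` proj1_sig i.
Definition Gi (i : Idx) : topGroup := QD G al be hal hbe (proj1_sig i) (proj2_sig i).
Definition NDi (i : Idx) := ND G al be (proj1_sig i).
Definition ai (i : Idx) : Gi i -> Gi i := qal G al be hal hbe _ (proj2_sig i).
Definition phi (i j : Idx) : Gi j -> Gi i := fun q => qpi (NDi i) (qrep (NDi j) q).
Definition fm (x : G) : prod_topology (fun i => tg_carrier (Gi i)) :=
  fun i => qpi (NDi i) x.

Lemma sub_i i : subgroup (NDi i). Proof. exact: (ND_sub G al be hal hbe _ (proj2_sig i)). Qed.
Lemma nor_i i : normal (NDi i). Proof. exact: (ND_nor G al be hal hbe _ (proj2_sig i)). Qed.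

Lemma NDle i j : le i j -> NDi j `<=` NDi i.
Proof. by move=> lij x Hx n; have [? ?] := Hx n; split; apply: lij. Qed.

Lemma phiE i j x : le i j -> phi i j (qpi (NDi j) x) = qpi (NDi i) x.
Proof.
move=> lij; apply/(qpi_eq (sub_i i)); apply: (NVV (sub_i i)).
rewrite invMg invgK; apply: (NDle _ _ lij); exact: (qrepP (sub_i j) x).
Qed.

Lemma GimulE i (p q : Gi i) : tg_mul p q = qmul (NDi i) p q. Proof. by []. Qed.

Lemma aiE i x : ai i (qpi (NDi i) x) = qpi (NDi i) (al x).
Proof. exact: (qalE G al be hal hbe ab _ (proj2_sig i) x). Qed.


Lemma le_trans' i j k : le i j -> le j k -> le i k.
Proof. by move=> lij ljk x /ljk /lij. Qed.

Lemma inv_sys : inverse_system_aut le ai phi.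
Proof.
split.
  split.
  - by exists (exist _ setT (onsT G)).
  - by move=> i x.
  - exact: le_trans'.
  - move=> i j; exists (exist _ _ (onsI _ _ _ (proj2_sig i) (proj2_sig j))).
    by split => x [].
split.
  move=> i; split.
  - exact: (QD_compact_group G al be hal cal hbe cbe _ (proj2_sig i) cG).
  - exact: qal_aut.
split.
  move=> i j lij; split.
  - move=> p q; rewrite -[p](@qrepK G (NDi j)) -[q](@qrepK G (NDi j)).
    move: (qrep _ p) (qrep _ q) => x y.
    rewrite !GimulE (qpiM (sub_i j) (nor_i j)) (phiE _ _ (x ** y) lij).
    by rewrite (phiE _ _ x lij) (phiE _ _ y lij) (qpiM (sub_i i) (nor_i i)).
  - apply/continuousP => U oU; rewrite qopenE.
    have -> : qpi (NDi j) @^-1` (phi i j @^-1` U) = qpi (NDi i) @^-1` U.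
      by apply/seteqP; split => z /=; rewrite (phiE _ _ z lij).
    by rewrite -qopenE.
split.
  by move=> i x; rewrite /phi qrepK.
split.
  move=> i j k x lij ljk; rewrite -[x](@qrepK G (NDi k)); move: (qrep _ x) => y.
  rewrite (phiE _ _ y ljk) (phiE _ _ y lij) (phiE _ _ y (le_trans' _ _ _ lij ljk)) //.
move=> i j x lij; rewrite -[x](@qrepK G (NDi j)); move: (qrep _ x) => y.
by rewrite aiE (phiE _ _ _ lij) (phiE _ _ _ lij) aiE.
Qed.


Definition topI : Idx := exist _ setT (onsT G).

Lemma Gi_haus i : hausdorff_space (Gi i).
Proof. exact: (QD_compact_group G al be hal cal hbe cbe _ (proj2_sig i) cG).2. Qed.

Lemma fm_range : range fm = inv_lim le phi.
Proof.
apply/seteqP; split.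
  by move=> _ [x _ <-] i j lij; exact: phiE.
move=> z Hz.
pose S i := [set x : G | qpi (NDi i) x = z i].
pose F := filter_from [set: Idx] S.
have FF : ProperFilter F.
  apply: filter_from_proper.
    apply: filter_from_filter; first by exists topI.
    move=> i j _ _; exists (exist _ _ (onsI _ _ _ (proj2_sig i) (proj2_sig j))) => //.
    move=> x Sx; rewrite /S /= in Sx *; split.
    - have lik : le i (exist _ _ (onsI _ _ _ (proj2_sig i) (proj2_sig j))) by move=> w [].
      by rewrite -(phiE _ _ x lik) Sx; exact: Hz.
    - have ljk : le j (exist _ _ (onsI _ _ _ (proj2_sig i) (proj2_sig j))) by move=> w [].
      by rewrite -(phiE _ _ x ljk) Sx; exact: Hz.
  by move=> i _; exists (qrep (NDi i) (z i)); exact: qrepK.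
have FT : F setT by exists topI.
have [y [_ cly]] := cG F FF FT.
exists y => //; apply: functional_extensionality_dep => i.
apply: contrapT => ne.
have cl1 : closed [set z i] := @accessible_closed_set1 _ (hausdorff_accessible (Gi_haus i)) (z i).
have nb : nbhs y (qpi (NDi i) @^-1` (~` [set z i])).
  apply: open_nbhs_nbhs; split => //.
  exact: ((iffLR (continuousP _)) (@qpi_cont G (NDi i)) _ (closed_openC cl1)).
have FS : F (S i) by exists i.
by have [x [Sx nSx]] := cly _ _ FS nb.
Qed.

Lemma fm_inj : injective fm.
Proof.
move=> x y e; apply: contrapT => nxy.
have ne : x^-g ** y <> tg_one.
  by move=> h; apply: nxy; rewrite -(mulKVg x y) h mulg1.
have oU : open (~` [set x^-g ** y]).
  exact: closed_openC (@accessible_closed_set1 _ (hausdorff_accessible hG) (x^-g ** y)).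
have U1 : (~` [set x^-g ** y]) tg_one by move=> h; apply: ne; rewrite -h.
have [C [oC CU]] := KL _ oU U1.
have := congr1 (fun g => g (exist _ C oC)) e; rewrite /fm /=.
move=> /(qpi_eq (sub_i (exist _ C oC))) NDxy.
exact: (CU _ (ND_C _ _ _ _ _ NDxy)).
Qed.

Lemma ons_open (C : set G) : ons C -> open C. Proof. by case => -[]. Qed.
Lemma ons_1 (C : set G) : ons C -> C tg_one. Proof. by case => -[[]]. Qed.
Lemma ons_mul (C : set G) x y : ons C -> C x -> C y -> C (x ** y).
Proof. by case => -[[_ h _]] _ _; apply: h. Qed.

Lemma fm_open (U : set G) : open U ->
  exists W, open W /\ fm @` U = W `&` inv_lim le phi.
Proof.
move=> oU.
pose P := [set p : Idx * G | forall c, proj1_sig p.1 c -> U (p.2 ** c)].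
pose cyl (p : Idx * G) := [set g : prod_topology (fun i => tg_carrier (Gi i)) |
  (qpi (NDi p.1) @` [set y | proj1_sig p.1 (p.2^-g ** y)]) (g p.1)].
exists (\bigcup_(p in P) cyl p); split.
  apply: bigcup_open => p _.
  have oV : open (qpi (NDi p.1) @` [set y | proj1_sig p.1 (p.2^-g ** y)]).
    apply: (qopen_image (sub_i p.1)); apply: open_lpre.
    exact: ons_open (proj2_sig p.1).
  exact: (cyl_open Idx (fun i => tg_carrier (Gi i)) p.1 _ oV).
apply/seteqP; split.
- move=> _ [x Ux <-]; split; last by rewrite -fm_range; exists x.
  have oUx : open [set c | U (x ** c)] := open_lpre G x U oU.
  have U1 : [set c | U (x ** c)] tg_one by rewrite /= mulg1.
  have [C [oC CU]] := KL _ oUx U1.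
  exists (exist _ C oC, x); first by move=> c Cc; exact: CU.
  by exists x => //=; rewrite mulVg; exact: ons_1.
- move=> g [[p Pp cg] Lg]; rewrite -fm_range in Lg; case: Lg => h _ ehg.
  rewrite -ehg in cg; case: cg => y Cy /(qpi_eq (sub_i p.1)) Nyh.
  exists h => //; have := Pp (p.2^-g ** h); rewrite mulKVg; apply.
  rewrite -(mulKVg y h) mulgA; apply: ons_mul (proj2_sig p.1) Cy _.
  exact: (ND_C _ _ _ _ _ Nyh).
Qed.


Lemma lim_iso : lim_iso_aut al le ai phi fm.
Proof.
split.
  by move=> x y i; rewrite /fm GimulE (qpiM (sub_i i) (nor_i i)).
split.
  by apply: (prod_cont G Idx (fun i => tg_carrier (Gi i)) fm) => i; exact: qpi_cont.
split; first exact: fm_inj.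
split; first exact: fm_range.
split; first exact: fm_open.
by move=> x i; rewrite /fm aiE.
Qed.

Lemma depth_all i : finite_depth (ai i).
Proof. exact: QD_finite_depth. Qed.

End Main.

Theorem proposition5p3 (G : topGroup) (alpha : G -> G) :
  compact_group G -> totally_disconnected [set: tg_carrier G] ->
  tg_aut alpha ->
  exists (I : Type) (le : I -> I -> Prop) (Gi : I -> topGroup)
         (ai : forall i, Gi i -> Gi i) (phi : forall i j, Gi j -> Gi i)
         (f : G -> prod_topology (fun i => tg_carrier (Gi i))),
    [/\ inverse_system_aut le ai phi,
        (forall i, finite_depth (ai i))
      & lim_iso_aut alpha le ai phi f].
Proof.
move=> [cG hG] tdG [[halpha calpha] [b [ab ba cb]]].
have hb : tg_hom b.
  by move=> x y; apply: (can_inj ab); rewrite halpha !ba.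
exists (Idx G), (le G), (Gi G alpha b halpha hb), (ai G alpha b halpha hb),
  (phi G alpha b halpha hb), (fm G alpha b halpha hb).
split.
- exact: inv_sys.
- exact: depth_all.
- exact: lim_iso.
Qed.
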